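(* Let $z\in(0,1)\setminus\mathbb{Q}$ and suppose $z\in[r_1,r_2]$ for rationals $r_1,r_2\in(0,1)$ whose continued fraction expansions have one of the two forms $$\text{(i)}\quad r_1=[(2)^{2k-1},(2,1)^\ell,s,a_1,\dots,a_{n_1},\infty],\qquad r_2=[(2)^{2k-1},b_1,\dots,b_{n_2},\infty],$$ $$\text{(ii)}\quad r_1=[(2)^{2k},a_1,\dots,a_{n_1},\infty],\qquad r_2=[(2)^{2k},(2,1)^\ell,s,b_1,\dots,b_{n_2},\infty],$$ where $k\ge1$, $\ell\ge0$, $s\ge3$ are integers and $a_i,b_i$ are positive integers ($n_1,n_2\ge 0$). Then $z\notin\mathcal{B}_2$.
   Context: For irrational $x\in(0,1)$, $x=[a_1(x),a_2(x),\dots]$ denotes its simple continued fraction expansion. For positive integers $c_1,\dots,c_n$, $[c_1,\dots,c_n,\infty]$ denotes the rational number $\cfrac{1}{c_1+\cfrac{1}{\ddots+\cfrac{1}{c_n}}}$. The notation $(c_1,\dots,c_m)^\ell$ denotes the block $c_1,\dots,c_m$ repeated $\ell$ times (empty if $\ell=0$), and $(c)^\ell$ denotes $c$ repeated $\ell$ times. $\mathcal{B}_2$ is the set of irrational $x\in(0,1)$ with $a_k(x)\le2$ for all $k\ge1$. *)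

(* Defs.v *)
From Stdlib Require Import Reals ZArith List.
Open Scope R_scope.

Definition irrational (x : R) : Prop :=
  forall p q : Z, q <> 0%Z -> x <> IZR p / IZR q.

Definition gauss (x : R) : R := / x - IZR (Int_part (/ x)).

(* k-th partial quotient a_k(x) (k >= 1) of x in (0,1): floor(1 / T^(k-1) x) *)
Definition cf_digit (k : nat) (x : R) : Z :=
  Int_part (/ (Nat.iter (k - 1) gauss x)).

Definition B2 (x : R) : Prop :=
  0 < x < 1 /\ irrational x /\ forall k : nat, (1 <= k)%nat -> (cf_digit k x <= 2)%Z.

(* [c_1, ..., c_n, oo] = 1/(c_1 + 1/(... + 1/c_n)) *)
Definition cf_val (cs : list nat) : R :=
  fold_right (fun c acc => / (INR c + acc)) 0 cs.

Definition rep (c : nat) (l : nat) : list nat := repeat c l.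
Definition rep21 (l : nat) : list nat := concat (repeat (2 :: 1 :: nil)%nat l).

(* Main.v *)
Require Import Defs.
From Stdlib Require Import Reals ZArith List Lia Lra.
Open Scope R_scope.

Lemma inv_le_rev a b : 0 < a -> 0 < b -> / a <= / b -> b <= a.
Proof.
  intros Ha Hb H.
  assert (0 < / a) by (apply Rinv_0_lt_compat; lra).
  apply Rinv_le_contravar in H; auto.
  rewrite !Rinv_inv in H; exact H.
Qed.

Lemma step x : B2 x -> exists d : Z, (d = 1 \/ d = 2)%Z /\
  x = / (IZR d + gauss x) /\ B2 (gauss x).
Proof.
  intros [[x0 x1] [irr dig]].
  set (d := Int_part (/ x)).
  destruct (base_Int_part (/ x)) as [b1 b2]. fold d in b1, b2.
  assert (hx : 1 < / x).
  { apply (Rmult_lt_reg_l x); auto. rewrite Rinv_r by lra. lra. }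
  assert (dpos : (0 < d)%Z) by (apply lt_IZR; lra).
  assert (dle : (d <= 2)%Z) by (apply (dig 1%nat); lia).
  assert (gx : gauss x = / x - IZR d) by reflexivity.
  exists d. split; [lia|]. split.
  { rewrite gx. replace (IZR d + (/ x - IZR d)) with (/ x) by ring.
    rewrite Rinv_inv; reflexivity. }
  split; [split|split].
  - rewrite gx. destruct (Req_dec (/ x) (IZR d)) as [E|E]; [|lra].
    exfalso. apply (irr 1%Z d); [lia|].
    rewrite <- E. field. lra.
  - lra.
  - intros p q hq E. rewrite gx in E.
    assert (Hq : IZR q <> 0) by (apply not_0_IZR; auto).
    assert (E2 : / x * IZR q = IZR (d * q + p)).
    { rewrite plus_IZR, mult_IZR.
      replace (/ x) with (IZR d + IZR p / IZR q) by lra. field; auto. }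
    assert (HD : IZR (d * q + p) <> 0).
    { rewrite <- E2. apply Rmult_integral_contrapositive; split; auto; lra. }
    apply (irr q (d * q + p)%Z).
    { intro Z0. apply HD. rewrite Z0. reflexivity. }
    rewrite <- E2. field. split; auto. lra.
  - intros k hk. unfold cf_digit.
    replace (k - 1)%nat with (S (k - 1) - 1)%nat by lia.
    replace (Nat.iter (S (k - 1) - 1) gauss (gauss x)) with
      (Nat.iter (S k - 1) gauss x).
    + apply dig. lia.
    + replace (S k - 1)%nat with (S (k - 1)) by lia.
      rewrite Nat.iter_succ_r. f_equal. lia.
Qed.

Lemma cf_range q : Forall (fun c => (1 <= c)%nat) q -> 0 <= cf_val q <= 1.
Proof.
  induction 1 as [|c q Hc Hq IH]; simpl; [lra|].
  assert (1 <= INR c) by (replace 1 with (INR 1) by reflexivity; apply le_INR; auto).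
  split.
  - left; apply Rinv_0_lt_compat; lra.
  - rewrite <- Rinv_1. apply Rinv_le_contravar; lra.
Qed.

Lemma rep21_F l : Forall (fun c => (1 <= c)%nat) (rep21 l).
Proof.
  induction l; unfold rep21 in *; simpl; auto.
Qed.

Lemma B2_gt x : B2 x -> 0 < x < 1.
Proof. intros [H _]; exact H. Qed.

Lemma F_tail l s a : (3 <= s)%nat -> Forall (fun c => (1 <= c)%nat) a ->
  Forall (fun c => (1 <= c)%nat) (rep21 l ++ s :: a).
Proof. intros. apply Forall_app; split; [apply rep21_F|constructor; auto; lia]. Qed.

Lemma lemB l s a y : (3 <= s)%nat -> Forall (fun c => (1 <= c)%nat) a ->
  B2 y -> y <= cf_val (rep21 l ++ s :: a) -> False.
Proof.
  revert y. induction l; intros y hs ha hy hle.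
  - simpl in hle. destruct (cf_range a ha) as [c0 c1].
    assert (3 <= INR s) by (replace 3 with (INR 3) by (simpl; ring); apply le_INR; auto).
    destruct (step y hy) as [d [hd [E hg]]]. pose proof (B2_gt _ hg).
    rewrite E in hle.
    destruct hd; subst d; apply inv_le_rev in hle; lra.
  - destruct (cf_range _ (F_tail l s a hs ha)) as [t0 t1].
    set (t := cf_val (rep21 l ++ s :: a)) in *.
    assert (Ev : cf_val (rep21 (S l) ++ s :: a) = / (2 + / (1 + t))).
    { unfold t, rep21. simpl. reflexivity. }
    rewrite Ev in hle.
    assert (0 < / (1 + t)) by (apply Rinv_0_lt_compat; lra).
    destruct (step y hy) as [d [hd [E hg]]]. pose proof (B2_gt _ hg).
    destruct (step _ hg) as [d' [hd' [E' hg']]]. pose proof (B2_gt _ hg').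
    rewrite E in hle.
    destruct hd; subst d; apply inv_le_rev in hle; try lra.
    rewrite E' in hle.
    assert (h2 : / (1 + t) <= / (IZR d' + gauss (gauss y))) by lra.
    destruct hd'; subst d'; apply inv_le_rev in h2; try lra.
    + apply (IHl (gauss (gauss y))); auto. lra.
Qed.

Lemma lemA n : forall x qu qv,
  Forall (fun c => (1 <= c)%nat) qu -> Forall (fun c => (1 <= c)%nat) qv ->
  B2 x -> cf_val (rep 2 n ++ qu) <= x <= cf_val (rep 2 n ++ qv) ->
  exists y, B2 y /\ (if Nat.even n then cf_val qu <= y <= cf_val qv
                     else cf_val qv <= y <= cf_val qu).
Proof.
  induction n; intros x qu qv hu hv hx [h1 h2].
  - exists x; simpl in *; auto.
  - assert (Fu : Forall (fun c => (1 <= c)%nat) (rep 2 n ++ qu)).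
    { apply Forall_app; split; auto. unfold rep. apply Forall_forall.
      intros c hc. apply repeat_spec in hc. lia. }
    assert (Fv : Forall (fun c => (1 <= c)%nat) (rep 2 n ++ qv)).
    { apply Forall_app; split; auto. unfold rep. apply Forall_forall.
      intros c hc. apply repeat_spec in hc. lia. }
    destruct (cf_range _ Fu) as [u0 u1]. destruct (cf_range _ Fv) as [v0 v1].
    change (rep 2 (S n) ++ qu) with (2%nat :: (rep 2 n ++ qu)) in h1.
    change (rep 2 (S n) ++ qv) with (2%nat :: (rep 2 n ++ qv)) in h2.
    simpl cf_val in h1, h2.
    destruct (step x hx) as [d [hd [E hg]]]. pose proof (B2_gt _ hg).
    rewrite E in h1, h2.
    change (INR 2) with (1 + 1) in h1, h2.
    destruct hd; subst d.
    + apply inv_le_rev in h2; lra.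
    + apply inv_le_rev in h1; try lra. apply inv_le_rev in h2; try lra.
      destruct (IHn (gauss x) qv qu hv hu hg) as [y [hy hy']]; [lra|].
      exists y; split; auto. rewrite Nat.even_succ, <- Nat.negb_even.
      destruct (Nat.even n); simpl; auto.
Qed.

Theorem mainTheorem5 (z r1 r2 : R) (k l s : nat) (a b : list nat) :
  (1 <= k)%nat -> (3 <= s)%nat ->
  Forall (fun c => (1 <= c)%nat) a -> Forall (fun c => (1 <= c)%nat) b ->
  0 < z < 1 -> irrational z ->
  r1 <= z <= r2 ->
  ((r1 = cf_val (rep 2 (2 * k - 1) ++ rep21 l ++ s :: a) /\
    r2 = cf_val (rep 2 (2 * k - 1) ++ b)) \/
   (r1 = cf_val (rep 2 (2 * k) ++ a) /\
    r2 = cf_val (rep 2 (2 * k) ++ rep21 l ++ s :: b))) ->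
  ~ B2 z.
Proof.
  intros hk hs ha hb _ _ hz H hB.
  destruct H as [[E1 E2]|[E1 E2]]; subst r1 r2.
  - destruct (lemA _ z _ _ (F_tail l s a hs ha) hb hB hz) as [y [hy hy']].
    replace (2 * k - 1)%nat with (S (2 * (k - 1))) in hy' by lia.
    rewrite Nat.even_succ, <- Nat.negb_even, Nat.even_even in hy'. simpl in hy'.
    apply (lemB l s a y); auto; lra.
  - destruct (lemA _ z _ _ ha (F_tail l s b hs hb) hB hz) as [y [hy hy']].
    rewrite Nat.even_even in hy'.
    apply (lemB l s b y); auto; lra.
Qed.
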